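(* Let $r\ge2$ divide $[K:F]_{\rm i}$ (so $r$ is a power of $p$ and $t^{1/r}\in K$). Let $\mathcal{C}':A\to K\{\tau\}$ be the $\mathbb{F}_q$-algebra homomorphism with $\mathcal{C}'_t=t^{1/r}+\tau$. For $a=\sum_n x_nt^n\in A$ ($x_n\in\mathbb{F}_q$) put $\hat a=\sum_n x_n^{1/r}t^n\in A$, and for $\mu=\sum_i c_i\tau^i\in K\{\tau\}$ put ${}^{(r)}\mu=\sum_i c_i^r\tau^i$. Then: (1) ${}^{(r)}\mathcal{C}'_{\hat a}=\mathcal{C}_a$ for every $a\in A$; (2) for every $a\in A$ and every $\lambda\in K^{\rm sep}$ with $\mathcal{C}'_{\hat a}(\lambda)=0$, there is a unique $\delta\in K^{\rm sep}$ with $\mathcal{C}_a(\delta)=0$ and $\lambda=\delta^{1/r}$ (i.e. $\lambda^r=\delta$).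
   Context: $p$ prime, $q$ a power of $p$, $A=\mathbb{F}_q[t]$, $F=\mathbb{F}_q(t)$, $K$ a finite extension of $F$, $K_{\rm s}$ the separable closure of $F$ in $K$, $[K:F]_{\rm i}=[K:K_{\rm s}]$. $K\{\tau\}$ is the twisted polynomial ring with $\tau c=c^q\tau$; its elements act on $K^{\rm sep}$ with $\tau$ acting as the $q$-th power map. The Carlitz module $\mathcal{C}:A\to K\{\tau\}$ is the $\mathbb{F}_q$-algebra homomorphism with $\mathcal{C}_t=t+\tau$. *)

(* Defs.v *)
From HB Require Import structures.
From mathcomp Require Import all_boot all_order all_algebra all_field.
Set Implicit Arguments. Unset Strict Implicit. Unset Printing Implicit Defensive.
Import Order.TTheory GRing.Theory.
Local Open Scope ring_scope.

(* F = F_q(t) is the fraction field of A = F_q[t] = {poly Fq}; q = #|Fq|. *)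
Notation FF Fq := {fraction {poly Fq}}.

Section Defs.
Variable Fq : finFieldType.
Local Notation q := #|Fq|.
Variable K : fieldExtType (FF Fq).

Definition cK (c : Fq) : K := (FracField.tofrac c%:P)%:A.
Definition tK : K := (FracField.tofrac ('X : {poly Fq}))%:A.

(* Twisted polynomials K{tau}: an element sum_i c_i tau^i is represented by
   its coefficient sequence, stored as a {poly K}; the ring structure used
   is the twisted one below (tau c = c^q tau), NOT the one of {poly K}. *)
Definition tmul (f g : {poly K}) : {poly K} :=
  \poly_(k < (size f + size g).-1)
     \sum_(i < k.+1) f`_i * (g`_(k - i)) ^+ (q ^ i).
Definition tpow (f : {poly K}) (n : nat) : {poly K} := iter n (tmul f) 1.
Definition tau : {poly K} := 'X.

Definition drin (phit : {poly K}) (a : {poly Fq}) : {poly K} :=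
  \sum_(n < size a) cK a`_n *: tpow phit n.

Definition Carlitz : {poly Fq} -> {poly K} := drin (tK%:P + tau).

Definition twist (r : nat) (mu : {poly K}) : {poly K} :=
  map_poly (fun c => c ^+ r) mu.

Definition teval (L : fieldType) (iota : {rmorphism K -> L})
    (mu : {poly K}) (x : L) : L :=
  \sum_(i < size mu) iota mu`_i * x ^+ (q ^ i).

Definition is_separable_closure (L : fieldType) (iota : {rmorphism K -> L}) :=
  (forall x : L, exists P : {poly K},
      [/\ P != 0, separable_poly P & root (map_poly iota P) x]) /\
  (forall P : {poly L}, (1 < size P)%N -> separable_poly P ->
      exists x, root P x).
End Defs.

(* x^{1/r} in F_q: the (unique, for r a power of p) y with y^r = x *)
Definition froot (Fq : finFieldType) (r : nat) (x : Fq) : Fq :=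
  odflt x [pick y : Fq | y ^+ r == x].

Definition hat (Fq : finFieldType) (r : nat) (a : {poly Fq}) : {poly Fq} :=
  \poly_(i < size a) froot r a`_i.

(* Main.v *)
Require Import Defs.
From HB Require Import structures.
From mathcomp Require Import all_boot all_order all_algebra all_field.
From Stdlib Require Import Classical.
Import GRing.Theory.
Local Open Scope ring_scope.

Set Implicit Arguments. Unset Strict Implicit. Unset Printing Implicit Defensive.

Lemma bez_nat (p d : nat) : prime p -> (0 < d < p)%N ->
  exists a b : nat, (a * d = 1 + b * p)%N.
Proof.
move=> pp /andP[d0 dp].
have [b _ hb] := Bezoutl p d0.
have cop : coprime d p by rewrite coprime_sym prime_coprime // gtnNdvd.
rewrite (eqP cop) in hb.
case/dvdnP: hb => a ha; exists a, b; by rewrite -ha.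
Qed.

Lemma pw_lemma (K : fieldType) (S : K -> Prop) (p d : nat) (u : K) :
  prime p -> (0 < d < p)%N ->
  S 0 -> S 1 -> (forall x y, S x -> S y -> S (x * y)) -> (forall x, S x -> S x^-1) ->
  S (u ^+ d) -> S (u ^+ p) -> S u.
Proof.
move=> pp hd S0 S1 SM SV Sd Sp.
have [a [b hab]] := bez_nat pp hd.
have SX : forall x n, S x -> S (x ^+ n).
  move=> x n Sx; elim: n => [|n IH]; last by rewrite exprS; apply: SM.
  by rewrite expr0.
have [->|u0] := eqVneq u 0; first by [].
have -> : u = (u ^+ d) ^+ a * ((u ^+ p) ^+ b)^-1.
  rewrite -!exprM [(d * a)%N]mulnC hab exprD expr1 [(b * p)%N]mulnC mulfK //.
  by rewrite expf_neq0.
by apply: SM; [apply: SX | apply: SV; apply: SX].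
Qed.

Definition powm (F : fieldType) (n : nat) (Hn : [pchar F].-nat n) (x : F) :=
  x ^+ n.
Section PowMorph.
Variables (F : fieldType) (n : nat) (Hn : [pchar F].-nat n).
Lemma powm_zmod : zmod_morphism (powm Hn).
Proof. by move=> x y; rewrite /powm exprDn_pchar // exprNn_pchar. Qed.
Lemma powm_monoid : monoid_morphism (powm Hn).
Proof. by split=> [|x y]; rewrite /powm ?expr1n // exprMn. Qed.
HB.instance Definition _ := GRing.isZmodMorphism.Build F F (powm Hn) powm_zmod.
HB.instance Definition _ := GRing.isMonoidMorphism.Build F F (powm Hn) powm_monoid.
End PowMorph.

Check fun (F : fieldType) n (H : [pchar F].-nat n) => (powm H : {rmorphism F -> F}).

Lemma frac_rep (R : idomainType) (a : {fraction R}) :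
  exists n d, d != 0 /\ a * FracField.tofrac d = FracField.tofrac n.
Proof.
elim/quotW: a => x; exists (\n_x), (\d_x); split; first exact: denom_ratioP.
rewrite !piE.
Abort.
Lemma frac_rep (R : idomainType) (a : {fraction R}) :
  exists n d, d != 0 /\ a * FracField.tofrac d = FracField.tofrac n.
Proof.
elim/quotW: a => x; exists (\n_x), (\d_x); split; first exact: denom_ratioP.
change (FracField.mul (\pi_({fraction R})%qT x) (FracField.tofrac \d_x) = FracField.tofrac \n_x).
rewrite !piE; apply/eqmodP; rewrite /= FracField.equivfE /FracField.mulf.
rewrite !numden_Ratio ?mulf_neq0 ?denom_ratioP ?oner_neq0 //.
by rewrite !mulr1 mulrC.
Qed.

Section CharP.
Variables (K : fieldType) (p : nat) (Hp : p \in [pchar K]).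
Local Notation frob := (pFrobenius_aut Hp).

Lemma pprime : prime p. Proof. exact: pcharf_prime Hp. Qed.

Lemma horner_modp0 (P G : {poly K}) s : G.[s] = 0 -> P.[s] = 0 -> (P %% G).[s] = 0.
Proof.
move=> G0 P0; move: P0; rewrite {1}(divp_eq P G) hornerD hornerM G0 mulr0 add0r.
by [].
Qed.

Lemma horner_modp_root (P G : {poly K}) s : G.[s] = 0 -> (P %% G).[s] = P.[s].
Proof.
by move=> G0; rewrite {2}(divp_eq P G) hornerD hornerM G0 mulr0 add0r.
Qed.

Lemma XsubC_p (s : K) : ('X - s%:P) ^+ p = 'X^p - (s ^+ p)%:P.
Proof.
have HpP : p \in [pchar {poly K}] := rmorph_pchar polyC Hp.
by rewrite -(pFrobenius_autE HpP) rmorphB /= !pFrobenius_autE polyC_exp.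
Qed.

Lemma map_frob_XnsubC (s : K) : map_poly frob ('X^p - s%:P) = ('X - s%:P) ^+ p.
Proof. by rewrite rmorphB /= map_polyXn map_polyC /= pFrobenius_autE XsubC_p. Qed.

Definition ispow (y : K) := exists w, w ^+ p = y.

Lemma ispow_pw (u : K) d : (0 < d < p)%N -> ispow (u ^+ d) -> ispow u.
Proof.
move=> hd Sd; apply: (pw_lemma (S := ispow) pprime hd) => //.
- by exists 0; rewrite expr0n gtn_eqF ?prime_gt0 ?pprime.
- by exists 1; rewrite expr1n.
- by move=> x y [a <-] [b <-]; exists (a * b); rewrite exprMn.
- by move=> x [a <-]; exists a^-1; rewrite exprVn.
- by exists u.
Qed.

Lemma dep n : forall (g : {poly K}) s, (size g <= n)%N -> g != 0 ->
  (size g <= p)%N -> (map_poly frob g).[s] = 0 -> ispow s.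
Proof.
elim: n => [|n IH] g s szn g0 szp rt.
  by move: szn; rewrite leqn0 size_poly_eq0 (negPf g0).
set P := 'X^p - s%:P; set m := P %% g.
have mr : (map_poly frob m).[s] = 0.
  rewrite map_modp map_frob_XnsubC; apply: horner_modp0 => //.
  by rewrite horner_exp hornerXsubC subrr expr0n gtn_eqF ?prime_gt0 ?pprime.
have [m0|mn0] := eqVneq m 0; last first.
  apply: (IH m) => //.
  - by rewrite -ltnS (leq_trans _ szn) // ltn_modp.
  - by rewrite (leq_trans _ szp) // ltnW // ltn_modp.
have : map_poly frob g %| ('X - s%:P) ^+ p.
  by apply/modp_eq0P; rewrite -map_frob_XnsubC -map_modp -/m m0 map_poly0.
case/dvdp_exp_XsubCP => k lekp eqk.
have szk : size g = k.+1 by rewrite -(size_map_poly frob) (eqp_size eqk) size_exp_XsubC.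
have k0 : k != 0%N.
  apply/eqP => k0; move: eqk; rewrite k0 expr0 => /eqp_root eqr.
  by have := eqr s; rewrite /root rt eqxx hornerE oner_eq0.
have hk : (0 < k < p)%N by rewrite lt0n k0 /=; have := szp; rewrite szk.
case/eqpP: eqk => [[c1 c2] /andP[c10 c20] /= eqc].
have mon : ('X - s%:P) ^+ k \is monic by apply: monic_exp; apply: monicXsubC.
have ck : c1 * frob g`_k = c2.
  have := congr1 (fun q : {poly K} => q`_k) eqc.
  rewrite !coefZ coef_map /=.
  have -> : (('X - s%:P) ^+ k)`_k = 1.
    by move/monicP: mon; rewrite lead_coefE size_exp_XsubC.
  by rewrite mulr1.
have c0 : c1 * frob g`_0 = c2 * (- s) ^+ k.
  have := congr1 (fun q : {poly K} => q`_0) eqc.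
  by rewrite !coefZ coef_map /= -[(('X - s%:P) ^+ k)`_0]horner_coef0 horner_exp hornerXsubC sub0r.
have gk0 : g`_k != 0.
  by have := g0; rewrite -lead_coef_eq0 lead_coefE szk.
have gkp : frob g`_k != 0 by rewrite fmorph_eq0.
have c2n : c2 != 0 by rewrite -ck mulf_neq0.
have ek : (- s) ^+ k = frob g`_0 / frob g`_k.
  apply: (mulfI c2n); rewrite -c0 -ck -mulrA [frob g`_k * _]mulrCA divff // mulr1.
  by [].
have : ispow ((- s) ^+ k).
  by rewrite ek; exists (g`_0 / g`_k); rewrite exprMn exprVn !pFrobenius_autE.
move/ispow_pw => /(_ hk) [w hw]; exists (- w).
by rewrite exprNn_pchar ?hw ?opprK // pnatE ?pprime.
Qed.
End CharP.

Section Ext.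
Variables (F0 : fieldType) (K : fieldExtType F0) (p : nat) (Hp : p \in [pchar K]).
Local Notation frob := (pFrobenius_aut Hp).

Lemma deg_p (E : {subfield K}) u : u \notin E -> u ^+ p \in E ->
  adjoin_degree E u = p.
Proof.
move=> uE upE.
have dv : minPoly E u %| ('X - u%:P) ^+ p.
  rewrite (XsubC_p Hp); apply: minPoly_dvdp.
    by rewrite rpredB ?rpredX ?polyOverX ?polyOverC.
  by rewrite /root !hornerE subrr.
case/dvdp_exp_XsubCP: dv => k lek eqk.
have mon : ('X - u%:P) ^+ k \is monic by apply: monic_exp; apply: monicXsubC.
move: eqk; rewrite eqp_monic ?monic_minPoly // => /eqP mk.
have dk : adjoin_degree E u = k.
  by apply: succn_inj; rewrite -size_minPoly mk size_exp_XsubC.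
rewrite dk; apply/eqP; rewrite eqn_leq lek /=; rewrite leqNgt; apply/negP => kp.
have k0 : (0 < k)%N.
  rewrite lt0n; apply/eqP => k0; move: mk; rewrite k0 expr0 => m1.
  by have := size_minPoly E u; rewrite m1 size_poly1.
have : (- u) ^+ k \in E.
  have := polyOverP (minPolyOver E u) 0; rewrite mk -horner_coef0.
  by rewrite horner_exp hornerXsubC sub0r.
move=> hk.
have : (- u) \in E.
  apply: (pw_lemma (S := fun y => y \in E) (pprime Hp) (d := k)) => //.
  - by rewrite k0.
  - exact: rpred0.
  - exact: rpred1.
  - by move=> x y; apply: rpredM.
  - by move=> x; rewrite memvV.
  - by rewrite exprNn_pchar ?rpredN // pnatE ?(pprime Hp).
by rewrite rpredN (negPf uE).
Qed.

Definition W (E : {vspace K}) (s y : K) :=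
  exists q, q \is a polyOver E /\ y = (map_poly frob q).[s].

Section WE.
Variables (E : {subfield K}) (s : K).

Lemma W_add y z : W E s y -> W E s z -> W E s (y + z).
Proof.
move=> [a [aE ->]] [b [bE ->]]; exists (a + b); split; first exact: rpredD.
by rewrite rmorphD hornerD.
Qed.

Lemma W_mul y z : W E s y -> W E s z -> W E s (y * z).
Proof.
move=> [a [aE ->]] [b [bE ->]]; exists (a * b); split; first exact: rpredM.
by rewrite rmorphM hornerM.
Qed.

Lemma W_frob e : e \in E -> W E s (e ^+ p).
Proof.
move=> eE; exists e%:P; split; first by rewrite polyOverC.
by rewrite map_polyC hornerC /= pFrobenius_autE.
Qed.

Lemma W_s : W E s s.
Proof.
by exists 'X; split; [exact: polyOverX | rewrite map_polyX hornerX].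
Qed.

Lemma W_1 : W E s 1.
Proof. by have := W_frob (rpred1 E); rewrite expr1n. Qed.

Lemma W_0 : W E s 0.
Proof. by have := W_frob (rpred0 E); rewrite expr0n gtn_eqF ?prime_gt0 ?(pprime Hp). Qed.

Lemma W_exp y n : W E s y -> W E s (y ^+ n).
Proof.
move=> Wy; elim: n => [|n IH]; first by rewrite expr0; exact: W_1.
by rewrite exprS; apply: W_mul.
Qed.

Lemma W_sum I (r : seq I) (P : pred I) (f : I -> K) :
  (forall i, P i -> W E s (f i)) -> W E s (\sum_(i <- r | P i) f i).
Proof.
move=> h; elim/big_ind: _ => //; [exact: W_0 | exact: W_add].
Qed.

Lemma W_sub y : s \in E -> W E s y -> y \in E.
Proof.
move=> sE [q [qE ->]]; apply: rpred_horner => //.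
apply/polyOverP => i; rewrite coef_map /= pFrobenius_autE rpredX //.
exact: (polyOverP qE).
Qed.

Lemma W_inv y : s \in E -> W E s y -> W E s y^-1.
Proof.
move=> sE Wy; have [->|y0] := eqVneq y 0; first by rewrite invr0; apply: W_0.
have yE := W_sub sE Wy.
have -> : y^-1 = y ^+ p.-1 * (y^-1) ^+ p.
  have hp : p = p.-1.+1 by rewrite prednK // prime_gt0 ?(pprime Hp).
  by rewrite exprVn {2}hp exprS invfM mulrCA divff ?expf_neq0 // mulr1.
by apply: W_mul; [apply: W_exp | apply: W_frob; rewrite rpredV].
Qed.
End WE.

Definition Gen (E : {vspace K}) (s : K) := forall y, y \in E -> W E s y.

Lemma gen_adj (E : {subfield K}) s u : Gen E s -> u ^+ p = s ->
  Gen <<E; u>>%AS u.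
Proof.
move=> G us y /Fadjoin_polyP [f fE ->].
rewrite horner_coef; apply: W_sum => i _; apply: W_mul; last first.
  by apply: W_exp; apply: W_s.
have [q [qE ->]] := G _ (polyOverP fE i).
rewrite -us -pFrobenius_autE horner_map /= pFrobenius_autE.
by apply: W_frob; rewrite mempx_Fadjoin.
Qed.

Lemma step (E : {subfield K}) s x : s \in E -> Gen E s -> x \notin E ->
  x ^+ p \in E -> exists u, u ^+ p = s /\ u \notin E.
Proof.
move=> sE G xE xpE.
have [q [qE hq]] := G _ xpE.
set P := 'X^p - s%:P.
have PE : P \is a polyOver E by rewrite rpredB ?rpredX ?polyOverX ?polyOverC.
set m := q %% P.
have mE : m \is a polyOver E by apply: modp_polyOver.
have hm : (map_poly frob m).[s] = x ^+ p.
  rewrite map_modp hq (map_frob_XnsubC Hp); apply: horner_modp_root.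
  by rewrite horner_exp hornerXsubC subrr expr0n gtn_eqF ?prime_gt0 ?(pprime Hp).
set g := m - x%:P.
have g0 : g != 0.
  apply/eqP => /eqP; rewrite subr_eq0 => /eqP mx.
  by move: mE; rewrite mx polyOverC (negPf xE).
have szP : size P = p.+1 by rewrite size_XnsubC ?prime_gt0 ?(pprime Hp).
have szg : (size g <= p)%N.
  rewrite (leq_trans (size_add _ _)) // geq_max size_opp size_polyC.
  rewrite -ltnS -szP ltn_modp -size_poly_eq0 szP /=.
  by rewrite (leq_trans (leq_b1 _)) // prime_gt0 ?(pprime Hp).
have rt : (map_poly frob g).[s] = 0.
  by rewrite rmorphB /= hornerD hornerN map_polyC hornerC /= hm pFrobenius_autE subrr.
have [u hu] := @dep _ _ Hp (size g) g s (leqnn _) g0 szg rt.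
exists u; split => //; apply/negP => uE.
move: hq; rewrite -hu -pFrobenius_autE horner_map /= => /fmorph_inj xq.
by move: xE; rewrite xq rpred_horner.
Qed.

Lemma find_x (E : {subfield K}) e : forall y, y \notin E -> y ^+ (p ^ e) \in E ->
  exists x, x \notin E /\ x ^+ p \in E.
Proof.
elim: e => [|e IH] y yE; first by rewrite expn0 expr1 (negPf yE).
have [ypE|ypE] := boolP (y ^+ p \in E); first by exists y.
by rewrite expnS exprM; apply: IH.
Qed.
End Ext.

From mathcomp Require Import zify.

Section Chain.
Variables (F0 : fieldType) (K : fieldExtType F0) (p : nat) (Hp : p \in [pchar K]).
Variables (Ks : {subfield K}) (t : K).
Hypothesis hins : forall y : K, exists e, y ^+ (p ^ e) \in Ks.

Lemma chain n : forall (E : {subfield K}) s j,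
  (\dim (fullv : {vspace K}) - \dim E < n)%N -> (Ks <= E)%VS -> s \in E ->
  Gen Hp E s -> s ^+ (p ^ j) = t -> \dim E = (p ^ j * \dim Ks)%N ->
  exists J s', \dim (fullv : {vspace K}) = (p ^ J * \dim Ks)%N /\ s' ^+ (p ^ J) = t.
Proof.
elim: n => // n IH E s j hn sKE sE G hs hd.
have [full|nfull] := boolP (\dim E == \dim (fullv : {vspace K})).
  by exists j, s; rewrite -(eqP full) hd.
have [y yE] : exists y, y \notin E.
  apply: NNPP => hc; apply: (negP nfull).
  have sub : (fullv <= E)%VS.
    apply/subvP => y _; apply: NNPP => hy; apply: hc; exists y; exact/negP.
  by rewrite eqn_leq (dimvS (subvf E)) (dimvS sub).
have [e he] := hins y.
have [x [xE xpE]] := find_x (E := E) yE (subvP sKE _ he).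
have [u [us uE]] := step sE G xE xpE.
have upE : u ^+ p \in E by rewrite us.
have dE' : \dim <<E; u>>%AS = (p * \dim E)%N.
  by rewrite dim_Fadjoin (deg_p Hp uE upE).
have h1 : (\dim E < \dim <<E; u>>%AS)%N.
  by rewrite dE' ltn_Pmull ?prime_gt1 ?(pprime Hp) ?adim_gt0.
have h2 : (\dim <<E; u>>%AS <= \dim (fullv : {vspace K}))%N by apply: dimvS; apply: subvf.
apply: (IH <<E; u>>%AS u j.+1).
- by move: hn h1 h2; lia.
- exact: subv_trans sKE (subv_adjoin E u).
- exact: memv_adjoin.
- exact: gen_adj G us.
- by rewrite expnS exprM us.
- by rewrite dE' hd expnS mulnA.
Qed.
End Chain.

Definition cKm (Fq : finFieldType) (K : fieldExtType (FF Fq)) :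
  {rmorphism Fq -> K} := GRing.in_alg K \o @FracField.tofrac _ \o polyC.

Lemma cKE (Fq : finFieldType) (K : fieldExtType (FF Fq)) c : cK K c = cKm K c.
Proof. by []. Qed.

Lemma pnat_pow (R : nzRingType) p k : p \in [pchar R] -> [pchar R].-nat (p ^ k)%N.
Proof.
move=> Hp; rewrite (eq_pnat _ (pcharf_eq Hp)) pnatX pnat_id //.
exact: pcharf_prime Hp.
Qed.

Lemma froot_spec (Fq : finFieldType) r (x : Fq) : [pchar Fq].-nat r ->
  Defs.froot r x ^+ r = x.
Proof.
move=> HR; have /codomP [y hy] := injF_onto (fmorph_inj (powm HR)) x.
rewrite /Defs.froot; case: pickP => [z /eqP //|none].
by have := none y; rewrite /= hy /powm eqxx.
Qed.

Section Twist.
Variables (Fq : finFieldType) (K : fieldExtType (FF Fq)) (r : nat).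
Hypothesis HR : [pchar K].-nat r.
Local Notation rf := (powm HR).

Lemma twistE mu : @twist Fq K r mu = map_poly rf mu. Proof. by []. Qed.

Lemma twist_tmul f g : @twist Fq K r (@tmul Fq K f g) = @tmul Fq K (@twist Fq K r f) (@twist Fq K r g).
Proof.
rewrite !twistE /tmul !size_map_poly; apply/polyP => k.
rewrite coef_map !coef_poly /=; case: ifP => _; last by rewrite rmorph0.
rewrite rmorph_sum; apply: eq_bigr => i _.
by rewrite rmorphM rmorphXn !coef_map.
Qed.

Lemma twist_tpow f n : @twist Fq K r (@tpow Fq K f n) = @tpow Fq K (@twist Fq K r f) n.
Proof.
elim: n => [|n IH]; first by rewrite /tpow /= twistE rmorph1.
by rewrite /tpow !iterS -!/(@tpow Fq K _ _) twist_tmul IH.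
Qed.

Lemma twist_drin phi b : @twist Fq K r (@drin Fq K phi b) =
  \sum_(0 <= n < size b) (cK K b`_n) ^+ r *: @tpow Fq K (@twist Fq K r phi) n.
Proof.
rewrite /drin big_mkord twistE rmorph_sum; apply: eq_bigr => i _.
rewrite -(twist_tpow phi i) twistE; apply/polyP => j; rewrite !(coefZ, coef_map) /= rmorphM. by [].
Qed.
End Twist.

Lemma size_hat (Fq : finFieldType) r (a : {poly Fq}) : [pchar Fq].-nat r ->
  (0 < r)%N -> size (hat r a) = size a.
Proof.
move=> HR r0; rewrite /hat.
have [->|a0] := eqVneq a 0; first by rewrite size_poly0; apply/eqP; rewrite -leqn0 size_poly.
apply: size_poly_eq; apply/eqP => h.
have := froot_spec (a`_(size a).-1) HR; rewrite h expr0n gtn_eqF //.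
by move/esym/eqP; rewrite -lead_coefE lead_coef_eq0 (negPf a0).
Qed.

Lemma part1 (Fq : finFieldType) (K : fieldExtType (FF Fq)) r (s : K)
  (HR : [pchar K].-nat r) (HRF : [pchar Fq].-nat r) (r0 : (0 < r)%N) :
  s ^+ r = tK K -> forall a : {poly Fq},
  @twist Fq K r (@drin Fq K (s%:P + tau K) (hat r a)) = Carlitz K a.
Proof.
move=> hs a; rewrite (twist_drin HR) /Carlitz /drin size_hat // big_mkord.
have -> : @twist Fq K r (s%:P + tau K) = (tK K)%:P + tau K.
  by rewrite (twistE HR) rmorphD /= map_polyC /tau map_polyX /= /powm hs.
apply: eq_bigr => n _.
by rewrite /hat coef_poly ltn_ord !cKE -rmorphXn froot_spec.
Qed.

Lemma part2 (Fq : finFieldType) (K : fieldExtType (FF Fq)) r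
  (HR : [pchar K].-nat r) (L : fieldType) (iota : {rmorphism K -> L})
  (HRL : [pchar L].-nat r) (mu : {poly K}) (lam : L) :
  teval iota mu lam = 0 -> teval iota (@twist Fq K r mu) (lam ^+ r) = 0.
Proof.
move=> h; rewrite /teval (twistE HR) size_map_poly.
have -> : \sum_(i < size mu) iota (map_poly (powm HR) mu)`_i * (lam ^+ r) ^+ (#|Fq| ^ i)
   = powm HRL (\sum_(i < size mu) iota mu`_i * lam ^+ (#|Fq| ^ i)).
  rewrite rmorph_sum; apply: eq_bigr => i _.
  by rewrite coef_map /= /powm rmorphXn exprMn exprAC.
by rewrite -/(teval iota mu lam) h rmorph0.
Qed.

Lemma memF_Ks (F0 : fieldType) (K : fieldExtType F0) (Ks : {subfield K}) (c : F0) :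
  c%:A \in Ks.
Proof. exact: (subvP (sub1v Ks)) _ (memvZ c (memv_line 1)). Qed.

Unset Implicit Arguments.
Set Strict Implicit.

Theorem lemma5p8 (Fq : finFieldType) (K : fieldExtType (FF Fq))
  (Ks : {subfield K})
  (hKs : forall x : K, (x \in Ks) = separable_element 1%VS x)
  (L : fieldType) (iota : {rmorphism K -> L})
  (hL : is_separable_closure iota)
  (r : nat) (hr2 : (2 <= r)%N) (hr : (r %| \dim_Ks (fullv : {vspace K}))%N) :
  (exists s : K, s ^+ r = tK K) /\
  forall s : K, s ^+ r = tK K ->
    (forall a : {poly Fq},
        twist r (drin (s%:P + tau K) (hat r a)) = Carlitz K a) /\
    (forall (a : {poly Fq}) (lam : L),
        teval iota (drin (s%:P + tau K) (hat r a)) lam = 0 ->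
        exists! delta : L,
          teval iota (Carlitz K a) delta = 0 /\ lam ^+ r = delta).
Proof.
have [p pp HpF] := finPcharP Fq.
have Hp : p \in [pchar K] := rmorph_pchar (cKm K) HpF.
have tKs : tK K \in Ks by apply: memF_Ks.
have hins : forall y : K, exists e, y ^+ (p ^ e) \in Ks.
  move=> y; have [n /andP[pn sep]] := separable_exponent_pchar 1%AS y.
  have [e he] : exists e, n = (p ^ e)%N.
    have : p.-nat n by rewrite -(eq_pnat _ (pcharf_eq Hp)).
    by case/p_natP => e ->; exists e.
  by exists e; rewrite -he hKs.
have WF : forall c, c \in (1%VS : {vspace K}) -> W Hp Ks (tK K) c.
  have WP : forall P : {poly Fq}, W Hp Ks (tK K) ((FracField.tofrac P)%:A).
    move=> P; rewrite -[P]coefK poly_def.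
    have -> : forall Q : {poly Fq}, (FracField.tofrac Q)%:A =
        (GRing.in_alg K \o @FracField.tofrac _) Q by [].
    rewrite rmorph_sum; apply: W_sum => i _.
    rewrite -mul_polyC rmorphM rmorphXn; apply: W_mul; last first.
      by apply: W_exp; apply: W_s.
    have [w hw] : exists w, w ^+ p = P`_i.
      have /codomP [w hw] := injF_onto (fmorph_inj (pFrobenius_aut HpF)) P`_i.
      by exists w; rewrite hw /= pFrobenius_autE.
    change (W Hp Ks (tK K) (cKm K P`_i)); rewrite -hw rmorphXn.
    by apply: W_frob; apply: memF_Ks.
  move=> c /vlineP [a ->].
  have [n [d [d0 hnd]]] := frac_rep a.
  have -> : a = FracField.tofrac n / FracField.tofrac d.
    by rewrite -hnd mulfK // tofrac_eq0.
  have -> : (FracField.tofrac n / FracField.tofrac d) *: (1 : K) =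
      (FracField.tofrac n)%:A * ((FracField.tofrac d)%:A)^-1.
    change (GRing.in_alg K (FracField.tofrac n / FracField.tofrac d) = GRing.in_alg K (FracField.tofrac n) * (GRing.in_alg K (FracField.tofrac d))^-1).
    by rewrite rmorphM fmorphV.
  by apply: W_mul => //; apply: W_inv => //.
have G0 : Gen Hp Ks (tK K).
  move=> y yKs; move: (yKs); rewrite hKs (pcharf_p_separable 1%AS y 0 Hp) expn1.
  case/Fadjoin_polyP => f fF ->.
  rewrite horner_coef; apply: W_sum => i _; apply: W_mul.
    by apply: WF; apply: (polyOverP fF).
  by rewrite exprAC; apply: W_frob; rewrite rpredX.
have h1 : tK K ^+ (p ^ 0) = tK K by rewrite expn0 expr1.
have h2 : \dim Ks = (p ^ 0 * \dim Ks)%N by rewrite expn0 mul1n.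
have [J [s' [hdim hs']]] := chain hins (n := (\dim (fullv : {vspace K}) - \dim Ks).+1)
  (leqnn _) (subvv Ks) tKs G0 h1 h2.
have dKs := adim_gt0 Ks.
move: hr; rewrite hdim mulnK // => /(dvdn_pfactor _ _ pp) [k lekJ hrk].
have HR : [pchar K].-nat r by rewrite hrk; apply: pnat_pow.
have HRF : [pchar Fq].-nat r by rewrite hrk; apply: pnat_pow.
have HRL : [pchar L].-nat r by rewrite hrk; apply: pnat_pow; exact: (rmorph_pchar iota Hp).
have r0 : (0 < r)%N by rewrite (leq_trans _ hr2).
split.
  exists (s' ^+ (p ^ (J - k))); rewrite -exprM hrk -expnD subnK //.
move=> s hs; have P1 := part1 HR HRF r0 hs.
split => // a lam hlam.
exists (lam ^+ r); split; last by move=> d [_ ->].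
split => //; rewrite -P1; exact: (part2 HR HRL hlam).
Qed.
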